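(* For $i\in\{1,2\}$ let $\Psi_i=[A_i,B_i,C_i,D_i]\in\mathcal{RH}_\infty^{m_i\times k_i}$ with $A_1\in\mathbb{R}^{n_1\times n_1}$, $A_2\in\mathbb{R}^{n_2\times n_2}$, and let $M\in\mathbb{R}^{m_1\times m_2}$. Assume $\Psi_1^*(\zeta)M\Psi_2(\zeta)=0$ for all $\zeta\in\partial\mathbb D$, and that $(A_1,B_1)$ and $(A_2,B_2)$ are controllable. Then there exists $Z_{12}\in\mathbb{R}^{n_1\times n_2}$ such that $$\begin{pmatrix}A_1^\top Z_{12}A_2-Z_{12} & A_1^\top Z_{12}B_2\\ B_1^\top Z_{12}A_2 & B_1^\top Z_{12}B_2\end{pmatrix}=\begin{pmatrix}C_1&D_1\end{pmatrix}^\top M\begin{pmatrix}C_2&D_2\end{pmatrix}.$$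
   Context: $[A,B,C,D](\zeta)=C(\zeta I-A)^{-1}B+D$. $\mathcal{RH}_\infty$ here means the realization matrix $A$ has all eigenvalues in the open unit disc $\mathbb D$. $\Psi^*(\zeta)=\Psi(\zeta^{-1})^\top$; $\partial\mathbb D$ is the unit circle. *)

(* Defs.v *)
From HB Require Import structures.
From mathcomp Require Import all_boot all_order all_algebra.
From mathcomp Require Import reals.
From mathcomp Require Import complex.
Set Implicit Arguments. Unset Strict Implicit. Unset Printing Implicit Defensive.
Import Order.TTheory GRing.Theory Num.Theory.
Local Open Scope ring_scope.
Local Open Scope complex_scope.

Section Defs.
Variable R : realType.

Definition cmx (m n : nat) (A : 'M[R]_(m, n)) : 'M[R[i]]_(m, n) :=
  map_mx (fun x : R => x%:C) A.

(* Transfer function [A,B,C,D](z) = C (z I - A)^{-1} B + D *)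
Definition tf (n m k : nat) (A : 'M[R]_n) (B : 'M[R]_(n, k))
    (C : 'M[R]_(m, n)) (D : 'M[R]_(m, k)) (z : R[i]) : 'M[R[i]]_(m, k) :=
  cmx C *m invmx (z%:M - cmx A) *m cmx B + cmx D.

(* Para-Hermitian conjugate Psi^*(z) = Psi(z^{-1})^T *)
Definition tf_star (n m k : nat) (A : 'M[R]_n) (B : 'M[R]_(n, k))
    (C : 'M[R]_(m, n)) (D : 'M[R]_(m, k)) (z : R[i]) : 'M[R[i]]_(k, m) :=
  (tf A B C D z^-1)^T.

Definition schur_stable (n : nat) (A : 'M[R]_n) : Prop :=
  forall l : R[i], root (char_poly (cmx A)) l -> `|l| < 1.

Definition controllable (n k : nat) (A : 'M[R]_n) (B : 'M[R]_(n, k)) : Prop :=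
  \rank (\mxrow_(j < n) (A ^+ j *m B)) = n.
End Defs.

(* Main.v *)
Require Import Defs.
From HB Require Import structures.
From mathcomp Require Import all_boot all_order all_algebra.
From mathcomp Require Import reals complex.
From mathcomp Require Import ring.
From mathcomp Require Import fingroup perm.
Set Implicit Arguments. Unset Strict Implicit. Unset Printing Implicit Defensive.
Import Order.TTheory GRing.Theory Num.Theory.
Local Open Scope ring_scope.
Notation pc M := (map_mx (@polyC _) M).

Lemma size_det_le2 (F : comNzRingType) m (M : 'M[{poly F}]_m) :
  (forall i j, size (M i j) <= 2)%N -> (size (\det M) <= m.+1)%N.
Proof.
move=> H; rewrite /determinant.
apply: leq_trans (size_sum _ _ _) _; apply/bigmax_leqP => s _.
rewrite size_Msign.
have : (size (\prod_(i < m) M i (s i))%R <= (\sum_(i < m) 1).+1)%N.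
  apply: (big_ind2 (fun (p : {poly F}) (k : nat) => size p <= k.+1)%N) => [|p k q l Hp Hq|i _].
  - by rewrite size_poly1.
  - apply: leq_trans (size_polyMleq _ _) _.
    by rewrite -subn1 -addnS leq_subLR addnA leq_add.
  - exact: H.
by rewrite sum1_card card_ord.
Qed.

Lemma size_char_poly_mx_entry (F : comNzRingType) (b : bool) (c : F) :
  (size ('X *+ b - c%:P)%R <= 2)%N.
Proof.
case: b => /=.
  by rewrite mulr1n size_XsubC.
by rewrite mulr0n sub0r size_polyN size_polyC; case: (_ != 0).
Qed.

Lemma size_adj_char (F : comNzRingType) n (A : 'M[F]_n) i j :
  (size (\adj (char_poly_mx A) i j) <= n)%N.
Proof.
rewrite !mxE /cofactor size_Msign.
have n_gt0 : (0 < n)%N := leq_ltn_trans (leq0n i) (ltn_ord i).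
apply: leq_trans (size_det_le2 _) _.
  by move=> a b; rewrite !mxE; exact: size_char_poly_mx_entry.
by rewrite prednK.
Qed.

Lemma size_pc_adj (F : comNzRingType) n p q (A : 'M[F]_n) (U : 'M[F]_(p, n))
  (V : 'M[F]_(n, q)) i j :
  (size ((pc U *m \adj (char_poly_mx A) *m pc V) i j) <= n)%N.
Proof.
rewrite mxE; apply: leq_trans (size_sum _ _ _) _; apply/bigmax_leqP => l _.
rewrite [pc V _ _]mxE mulrC mul_polyC; apply: leq_trans (size_scale_leq _ _) _.
rewrite mxE; apply: leq_trans (size_sum _ _ _) _; apply/bigmax_leqP => k _.
rewrite [pc U _ _]mxE mul_polyC; apply: leq_trans (size_scale_leq _ _) _.
exact: size_adj_char.
Qed.
Definition PF (F : comNzRingType) n (T : 'M[F]_n) : 'M[{poly F}]_n :=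
  1%:M - 'X *: pc T.

Lemma eval_pc (F : comNzRingType) m n (z : F) (M : 'M[F]_(m, n)) :
  map_mx (horner_eval z) (pc M) = M.
Proof. by apply/matrixP => i j; rewrite !mxE /= horner_evalE hornerC. Qed.

Lemma evalPF (F : comNzRingType) n (z : F) (T : 'M[F]_n) :
  map_mx (horner_eval z) (PF T) = 1%:M - z *: T.
Proof.
apply/matrixP => i j; rewrite !mxE /= horner_evalE.
by rewrite hornerD hornerN hornerMn hornerC mulrC hornerMX hornerC mulrC.
Qed.

Lemma evalPE (F : comNzRingType) n (z : F) (A : 'M[F]_n) :
  map_mx (horner_eval z) (char_poly_mx A) = z%:M - A.
Proof.
apply/matrixP => i j; rewrite !mxE /= horner_evalE.
by rewrite hornerD hornerN hornerMn hornerX hornerC.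
Qed.

Lemma det_PF (F : comNzRingType) n (z : F) (T : 'M[F]_n) :
  (\det (PF T)).[z] = \det (1%:M - z *: T).
Proof. by rewrite -horner_evalE -det_map_mx evalPF. Qed.

Lemma char_poly_eval (F : comNzRingType) n (z : F) (A : 'M[F]_n) :
  (char_poly A).[z] = \det (z%:M - A).
Proof. by rewrite -horner_evalE /char_poly -det_map_mx evalPE. Qed.

Lemma det_PF0 (F : comNzRingType) n (T : 'M[F]_n) : (\det (PF T)).[0] = 1.
Proof. by rewrite det_PF scale0r subr0 det1. Qed.

Lemma root_b (F : fieldType) n (T : 'M[F]_n) x :
  (\det (PF T)).[x] = 0 -> x != 0 /\ root (char_poly T) x^-1.
Proof.
move=> H; have xn0 : x != 0.
  by apply: contra_eqN H => /eqP ->; rewrite det_PF0 oner_eq0.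
split => //; apply/rootP; rewrite char_poly_eval.
move: H; rewrite det_PF.
have -> : 1%:M - x *: T = x *: (x^-1%:M - T).
  by rewrite scalerBr scale_scalar_mx mulfV.
rewrite detZ => /eqP; rewrite mulf_eq0 expf_eq0 (negPf xn0) andbF /=.
by move/eqP.
Qed.

Lemma char_poly_tr (F : comNzRingType) n (A : 'M[F]_n) :
  char_poly A^T = char_poly A.
Proof.
rewrite /char_poly -det_tr; congr (\det _).
by apply/matrixP => i j; rewrite !mxE eq_sym.
Qed.

Lemma coprime_ab (C : numClosedFieldType) n1 n2 (T : 'M[C]_n1) (A : 'M[C]_n2) :
  (forall l, root (char_poly T) l -> `|l| < 1) ->
  (forall l, root (char_poly A) l -> `|l| < 1) ->
  coprimep (char_poly A) (\det (PF T)).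
Proof.
move=> sT sA; apply: Pdiv.ClosedField.root_coprimep => x /sA xlt.
apply/negP => /eqP /root_b [xn0 /sT xilt].
have : `|x| * `|x^-1| < 1 by apply: mulr_ilt1.
by rewrite -normrM mulfV // normr1 ltxx.
Qed.

Lemma circle_poly0 (C : numClosedFieldType) (p : {poly C}) :
  (forall z : C, `|z| = 1 -> p.[z] = 0) -> p = 0.
Proof.
move=> H; apply/eqP; apply/negPn/negP => pn0.
pose u (t : nat) : C := t%:R + 'i.
have uu t : u t * (u t)^* = (t ^ 2).+1%:R.
  rewrite /u rmorphD /= conjC_nat conjCi.
  have -> : (t%:R + 'i) * (t%:R - 'i) = t%:R ^+ 2 - 'i ^+ 2 :> C by ring.
  by rewrite sqrCi opprK -natrX -natr1.
have ct t : (u t)^* = t%:R - 'i by rewrite /u rmorphD /= conjC_nat conjCi.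
have un0 t : (u t)^* != 0.
  apply/eqP => h; move: (uu t); rewrite h mulr0 => /esym/eqP.
  by rewrite pnatr_eq0.
have un0' t : u t != 0 by rewrite -conjC_eq0.
pose z (t : nat) : C := u t / (u t)^*.
have zn t : `|z t| = 1.
  by rewrite /z normrM normrV ?unitfE // norm_conjC mulfV // normr_eq0.
have zinj : injective z.
  move=> s t e.
  have e2 : u s * (u t)^* = u t * (u s)^*.
    have := congr1 (fun w => w * (u s)^* * (u t)^*) e.
    by rewrite /z divfK // mulrAC divfK // mulrC.
  move: e2; rewrite !ct /u => /eqP; rewrite -subr_eq0.
  have -> : (s%:R + 'i) * (t%:R - 'i) - (t%:R + 'i) * (s%:R - 'i) =
    2%:R * 'i * (t%:R - s%:R) :> C by ring.
  rewrite !mulf_eq0 pnatr_eq0 /= (negPf (neq0Ci C)) /= subr_eq0 eqr_nat.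
  by move/eqP.
pose rs := [seq z t | t <- iota 0 (size p)].
have hall : all (root p) rs.
  by apply/allP => w /mapP [t _ ->]; apply/rootP; apply: H.
have huniq : uniq rs by rewrite map_inj_uniq // iota_uniq.
by have := max_poly_roots pn0 hall huniq; rewrite size_map size_iota ltnn.
Qed.
Lemma kill_E (F : idomainType) n (a b : {poly F}) p q
  (E G : 'M[{poly F}]_(p, q)) :
  size a = n.+1 -> coprimep a b -> (forall i j, (size (E i j) <= n)%N) ->
  b *: E = a *: G -> E = 0.
Proof.
move=> sa cab sE e; apply/matrixP => i j; rewrite mxE.
have := congr1 (fun M : 'M[{poly F}]_(p, q) => M i j) e; rewrite !mxE => e'.
apply/eqP; apply: contraT => En0.
have : a %| E i j by rewrite -(Gauss_dvdpr _ cab) e' dvdp_mulIl.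
move/(dvdp_leq En0); rewrite sa => /leq_trans /(_ (sE i j)).
by rewrite ltnn.
Qed.

Lemma kill_C (F : idomainType) n (a : {poly F}) p q (W : 'M[F]_(p, q))
  (E : 'M[{poly F}]_(p, q)) :
  size a = n.+1 -> (forall i j, (size (E i j) <= n)%N) -> a *: pc W = E ->
  W = 0.
Proof.
move=> sa sE e; apply/matrixP => i j; rewrite mxE.
have := congr1 (fun M : 'M[{poly F}]_(p, q) => M i j) e; rewrite !mxE => e'.
apply/eqP; apply: contraT => Wn0.
have := sE i j; rewrite -e' mulrC mul_polyC size_scale // sa.
by rewrite ltnn.
Qed.

Lemma stein_inj (C : numClosedFieldType) n1 n2 (T : 'M[C]_n1)
  (A : 'M[C]_n2) (Z : 'M[C]_(n1, n2)) :
  (forall l, root (char_poly T) l -> `|l| < 1) ->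
  (forall l, root (char_poly A) l -> `|l| < 1) ->
  T *m Z *m A = Z -> Z = 0.
Proof.
move=> sT sA H.
have H' : pc T *m pc Z *m pc A = pc Z by rewrite -!map_mxM H.
have E1 : pc T *m pc Z *m char_poly_mx A = - (PF T *m pc Z).
  rewrite /char_poly_mx mulmxBr mul_mx_scalar H' /PF mulmxBl mul1mx.
  by rewrite -scalemxAl opprB.
have L : \adj (PF T) *m (pc T *m pc Z *m char_poly_mx A) *m
         \adj (char_poly_mx A) =
         char_poly A *: (\adj (PF T) *m pc T *m pc Z).
  rewrite !mulmxA -[_ *m char_poly_mx A *m _]mulmxA mul_mx_adj.
  by rewrite mul_mx_scalar.
have R : \adj (PF T) *m (- (PF T *m pc Z)) *m \adj (char_poly_mx A) =
         - (\det (PF T) *: (pc Z *m \adj (char_poly_mx A))).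
  rewrite mulmxN mulNmx mulmxA mul_adj_mx mul_scalar_mx -scalemxAl.
  by [].
have E2 : \det (PF T) *: (pc Z *m \adj (char_poly_mx A)) =
          char_poly A *: (- (\adj (PF T) *m pc T *m pc Z)).
  by rewrite scalerN -L E1 R opprK.
have Y0 := kill_E (size_char_poly A) (coprime_ab sT sA) _ E2.
have Y : pc Z *m \adj (char_poly_mx A) = 0.
  apply: Y0 => i j.
  have := size_pc_adj A Z 1%:M i j.
  by rewrite map_mx1 mulmx1.
have : char_poly A *: pc Z = 0.
  by rewrite -mul_mx_scalar -mul_adj_mx mulmxA Y mul0mx.
move/eqP; rewrite scalemx_eq0 -size_poly_eq0 size_char_poly /= => /eqP.
by rewrite -(map_mx0 (@polyC C)) => /map_mx_inj.
Qed.
Lemma exprS_mx (F : comNzRingType) n q (A : 'M[F]_n) (B : 'M[F]_(n, q)) j :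
  A ^+ j.+1 *m B = A *m (A ^+ j *m B).
Proof. by rewrite exprS mulmxA. Qed.

Lemma LE (F : idomainType) n p q (A : 'M[F]_n) (N : 'M[F]_(p, n))
  (B : 'M[F]_(n, q)) :
  pc N *m \adj (char_poly_mx A) *m pc B = 0 -> forall j, N *m A ^+ j *m B = 0.
Proof.
move=> H0.
have step j : pc N *m \adj (char_poly_mx A) *m pc (A ^+ j *m B) = 0 ->
    N *m A ^+ j *m B = 0 /\
    pc N *m \adj (char_poly_mx A) *m pc (A ^+ j.+1 *m B) = 0.
  move=> Yj.
  have h1 : pc N *m \adj (char_poly_mx A) *m char_poly_mx A *m pc (A ^+ j *m B)
      = char_poly A *: pc (N *m A ^+ j *m B).
    by rewrite -(mulmxA (pc N)) mul_adj_mx mul_mx_scalar -scalemxAl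
      -map_mxM mulmxA.
  have h2 : pc N *m \adj (char_poly_mx A) *m char_poly_mx A *m pc (A ^+ j *m B)
      = - (pc N *m \adj (char_poly_mx A) *m pc (A ^+ j.+1 *m B)).
    rewrite /char_poly_mx mulmxBr mulmxBl mul_mx_scalar -scalemxAl Yj scaler0.
    by rewrite sub0r -mulmxA exprS_mx -map_mxM.
  have W0 : N *m A ^+ j *m B = 0.
    apply: (kill_C (size_char_poly A) _ (esym (etrans (esym h2) h1))) => i k.
    by rewrite mxE size_polyN size_pc_adj.
  split => //; apply/eqP; rewrite -oppr_eq0 -h2 h1 W0 map_mx0 scaler0 //.
have all j : pc N *m \adj (char_poly_mx A) *m pc (A ^+ j *m B) = 0.
  elim: j => [|j IH]; first by rewrite expr0 mul1mx.
  exact: (step j IH).2.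
by move=> j; exact: (step j (all j)).1.
Qed.

Lemma LF (F : idomainType) n p q (T : 'M[F]_n) (G : 'M[F]_(p, n))
  (N : 'M[F]_(n, q)) :
  pc G *m \adj (PF T) *m pc N = 0 -> forall j, G *m T ^+ j *m N = 0.
Proof.
move=> H0.
have step j : pc G *m \adj (PF T) *m pc (T ^+ j *m N) = 0 ->
    G *m T ^+ j *m N = 0 /\
    pc G *m \adj (PF T) *m pc (T ^+ j.+1 *m N) = 0.
  move=> Yj.
  have h1 : pc G *m \adj (PF T) *m PF T *m pc (T ^+ j *m N)
      = \det (PF T) *: pc (G *m T ^+ j *m N).
    by rewrite -(mulmxA (pc G)) mul_adj_mx mul_mx_scalar -scalemxAl
      -map_mxM mulmxA.
  have h2 : pc G *m \adj (PF T) *m PF T *m pc (T ^+ j *m N)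
      = - ('X *: (pc G *m \adj (PF T) *m pc (T ^+ j.+1 *m N))).
    rewrite /PF mulmxBr mulmx1 mulmxBl Yj sub0r -scalemxAr -scalemxAl.
    by rewrite exprS_mx -!mulmxA -map_mxM.
  have W0 : G *m T ^+ j *m N = 0.
    have := congr1 (map_mx (horner_eval 0)) (etrans (esym h1) h2).
    rewrite map_mxN !map_mxZ !eval_pc /= !horner_evalE det_PF0 hornerX.
    by rewrite scale1r scale0r oppr0.
  split => //; apply/eqP.
  have : 'X *: (pc G *m \adj (PF T) *m pc (T ^+ j.+1 *m N)) == 0.
    by rewrite -oppr_eq0 -h2 h1 W0 map_mx0 scaler0.
  by rewrite scalemx_eq0 polyX_eq0.
have all j : pc G *m \adj (PF T) *m pc (T ^+ j *m N) = 0.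
  elim: j => [|j IH]; first by rewrite expr0 mul1mx.
  exact: (step j IH).2.
by move=> j; exact: (step j (all j)).1.
Qed.
Lemma stepC (C : numClosedFieldType) n1 n2 p q (T : 'M[C]_n1) (A : 'M[C]_n2)
  (G : 'M[C]_(p, n1)) (N1 : 'M[C]_(n1, q)) (N2 : 'M[C]_(p, n2))
  (B : 'M[C]_(n2, q)) (K : 'M[C]_(p, q)) :
  (forall l, root (char_poly T) l -> `|l| < 1) ->
  (forall l, root (char_poly A) l -> `|l| < 1) ->
  (forall z : C, `|z| = 1 ->
     K + G *m invmx (z^-1%:M - T) *m N1 + N2 *m invmx (z%:M - A) *m B = 0) ->
  [/\ K = 0, forall j, G *m T ^+ j *m N1 = 0 & forall j, N2 *m A ^+ j *m B = 0].
Proof.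
move=> sT sA H.
pose Gp := pc G *m \adj (PF T) *m pc N1.
pose Ep := pc N2 *m \adj (char_poly_mx A) *m pc B.
pose Q := (char_poly A * \det (PF T)) *: pc K + ('X * char_poly A) *: Gp
          + \det (PF T) *: Ep.
have hz z : `|z| = 1 -> map_mx (horner_eval z) Q = 0.
  move=> z1.
  have zn0 : z != 0 by rewrite -normr_eq0 z1 oner_eq0.
  have az : (char_poly A).[z] != 0.
    by apply/negP => /eqP/rootP/sA; rewrite z1 ltxx.
  have bz : (\det (PF T)).[z] != 0.
    apply/negP => /eqP/root_b [_ /sT]; rewrite normfV z1 invr1 ltxx //.
  have e1 : invmx (z%:M - A) = ((char_poly A).[z])^-1 *: \adj (z%:M - A).
    rewrite /invmx ifT; last by rewrite unitmxE -char_poly_eval unitfE.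
    by rewrite -char_poly_eval.
  have e2 : invmx (z^-1%:M - T) =
            (z / (\det (PF T)).[z]) *: \adj (1%:M - z *: T).
    have -> : z^-1%:M - T = z^-1 *: (1%:M - z *: T).
      by rewrite scalerBr scale_scalar_mx mulr1 scalerA mulVf // scale1r.
    have u1 : 1%:M - z *: T \in unitmx by rewrite unitmxE -det_PF unitfE.
    rewrite invmxZ; last first.
      by rewrite unitmxE detZ unitrM unitrX ?unitfE ?invr_eq0 // -unitfE -unitmxE.
    rewrite /invmx ifT // -det_PF scalerA invrK //.
  have := congr1 (fun M => ((char_poly A).[z] * (\det (PF T)).[z]) *: M)
    (H z z1).
  rewrite /= scaler0 e1 e2 -!scalemxAr -!scalemxAl !scalerDr !scalerA.
  have -> : (char_poly A).[z] * (\det (PF T)).[z] *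
      (z / (\det (PF T)).[z]) = z * (char_poly A).[z].
    by field.
  have -> : (char_poly A).[z] * (\det (PF T)).[z] * ((char_poly A).[z])^-1
      = (\det (PF T)).[z].
    by field.
  move=> <-.
  rewrite /Q /Gp /Ep !map_mxD !map_mxZ !map_mxM !map_mx_adj evalPF evalPE.
  by rewrite !eval_pc /= !horner_evalE !hornerE.
have Q0 : Q = 0.
  apply/matrixP => i j; rewrite [RHS]mxE; apply: circle_poly0 => z z1.
  have := congr1 (fun M : 'M[C]_(p, q) => M i j) (hz z z1).
  by rewrite !mxE /= horner_evalE.
have E2 : \det (PF T) *: Ep =
    char_poly A *: (- (\det (PF T) *: pc K + 'X *: Gp)).
  apply/eqP; move: Q0; rewrite /Q addrC => /eqP; rewrite addr_eq0 => /eqP ->.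
  by rewrite scalerN scalerDr !scalerA [_ * 'X]mulrC.
have Ep0 : Ep = 0.
  apply: (kill_E (size_char_poly A) (coprime_ab sT sA) _ E2) => i j.
  exact: size_pc_adj.
have W0 : \det (PF T) *: pc K + 'X *: Gp = 0.
  move: E2; rewrite Ep0 scaler0 => /eqP; rewrite eq_sym scalemx_eq0.
  rewrite -size_poly_eq0 size_char_poly oppr_eq0 /=.
  by move/eqP.
have K0 : K = 0.
  have := congr1 (map_mx (horner_eval 0)) W0.
  rewrite map_mxD !map_mxZ eval_pc /= !horner_evalE det_PF0 hornerX.
  by rewrite scale1r scale0r addr0 map_mx0.
have Gp0 : Gp = 0.
  move: W0; rewrite K0 map_mx0 scaler0 add0r => /eqP.
  by rewrite scalemx_eq0 polyX_eq0 => /eqP.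
split => //; [exact: LF | exact: LE].
Qed.
Definition steinf (F : fieldType) n1 n2 (T : 'M[F]_n1) (A : 'M[F]_n2)
  (Z : 'M[F]_(n1, n2)) := T *m Z *m A - Z.

Lemma steinf_lin (F : fieldType) n1 n2 (T : 'M[F]_n1) (A : 'M[F]_n2) :
  linear (steinf T A).
Proof.
move=> a x y; rewrite /steinf mulmxDr mulmxDl -scalemxAr -scalemxAl.
by rewrite scalerBr addrACA opprD.
Qed.

HB.instance Definition _ (F : fieldType) n1 n2 (T : 'M[F]_n1) (A : 'M[F]_n2) :=
  GRing.isLinear.Build F 'M[F]_(n1, n2) 'M[F]_(n1, n2) _ (steinf T A)
    (steinf_lin T A).

Lemma stein_surj (F : fieldType) n1 n2 (T : 'M[F]_n1) (A : 'M[F]_n2) :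
  (forall Z, T *m Z *m A - Z = 0 -> Z = 0) ->
  forall Y : 'M[F]_(n1, n2), exists Z, T *m Z *m A - Z = Y.
Proof.
move=> inj Y.
pose L := lin_mx (steinf T A).
have Lfree : row_free L.
  rewrite -kermx_eq0; apply/eqP/matrixP => i j; rewrite mxE.
  have : (row i (kermx L) <= kermx L)%MS by exact: row_sub.
  move/sub_kermxP; rewrite -[row i _]vec_mxK mul_vec_lin => h.
  have h2 : steinf T A (vec_mx (row i (kermx L))) = 0.
    by apply: (can_inj mxvecK); rewrite h linear0.
  have r0 : row i (kermx L) = 0 by rewrite -[row i _]vec_mxK (inj _ h2) linear0.
  by have := congr1 (fun r : 'rV_(n1 * n2) => r 0 j) r0; rewrite !mxE.
have Lu : L \in unitmx by rewrite -row_free_unit.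
exists (vec_mx (mxvec Y *m invmx L)).
apply: (can_inj mxvecK).
by rewrite -/(steinf T A _) -mul_vec_lin vec_mxK mulmxKV.
Qed.
Lemma key (F : fieldType) n1 n2 (T : 'M[F]_n1) (A : 'M[F]_n2)
  (Z : 'M[F]_(n1, n2)) (w z : F) :
  w * z = 1 -> (w%:M - T) \in unitmx -> (z%:M - A) \in unitmx ->
  invmx (w%:M - T) *m (T *m Z *m A - Z) *m invmx (z%:M - A)
  = Z - w *: (invmx (w%:M - T) *m Z) - z *: (Z *m invmx (z%:M - A)).
Proof.
move=> wz uU uV.
have SU : invmx (w%:M - T) *m (w%:M - T) = 1%:M := mulVmx uU.
have VR : (z%:M - A) *m invmx (z%:M - A) = 1%:M := mulmxV uV.
have eT : T = w%:M - (w%:M - T) by rewrite subKr.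
have eA : A = z%:M - (z%:M - A) by rewrite subKr.
move: SU VR eT eA.
move: (invmx (w%:M - T)) (invmx (z%:M - A)) (w%:M - T) (z%:M - A).
move=> S R U V SU VR -> ->.
rewrite !mulmxBr !mulmxBl !mul_mx_scalar !mul_scalar_mx.
rewrite !mulmxBr !mulmxBl -!scalemxAr -!scalemxAl !mulmxA SU !mul1mx.
rewrite -!(mulmxA _ V) VR !mulmx1 !scalerA.
rewrite -scalemxAr -scalemxAl -!mulmxA VR mulmx1 mulrC wz scale1r !mulmxA.
move: (invmx U *m Z *m invmx V) (z *: (Z *m invmx V)) (w *: (invmx U *m Z)).
move=> a b c.
by rewrite opprB addrAC [a - b - a]addrAC subrr add0r addrC.
Qed.

Lemma stepB (F : fieldType) n1 n2 m1 m2 k1 k2 (a1 : 'M[F]_n1)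
  (b1 : 'M[F]_(n1, k1)) (c1 : 'M[F]_(m1, n1)) (d1 : 'M[F]_(m1, k1))
  (a2 : 'M[F]_n2) (b2 : 'M[F]_(n2, k2)) (c2 : 'M[F]_(m2, n2))
  (d2 : 'M[F]_(m2, k2)) (m : 'M[F]_(m1, m2)) (Z : 'M[F]_(n1, n2)) (z : F) :
  z != 0 -> (z^-1%:M - a1^T) \in unitmx -> (z%:M - a2) \in unitmx ->
  a1^T *m Z *m a2 - Z = c1^T *m m *m c2 ->
  (c1 *m invmx (z^-1%:M - a1) *m b1 + d1)^T *m m *m
     (c2 *m invmx (z%:M - a2) *m b2 + d2) =
  (d1^T *m m *m d2 - b1^T *m Z *m b2)
  + b1^T *m invmx (z^-1%:M - a1^T) *m (c1^T *m m *m d2 - a1^T *m Z *m b2)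
  + (d1^T *m m *m c2 - b1^T *m Z *m a2) *m invmx (z%:M - a2) *m b2.
Proof.
move=> zn0 uS uR Hst.
have wz : z^-1 * z = 1 := mulVf zn0.
have trS : (invmx (z^-1%:M - a1))^T = invmx (z^-1%:M - a1^T).
  by rewrite trmx_inv linearB /= tr_scalar_mx.
have K := key Z wz uS uR; rewrite Hst in K.
have SA : invmx (z^-1%:M - a1^T) *m a1^T = z^-1 *: invmx (z^-1%:M - a1^T) - 1%:M.
  have := mulVmx uS; rewrite mulmxBr mul_mx_scalar => <-.
  by rewrite subKr.
have AR : a2 *m invmx (z%:M - a2) = z *: invmx (z%:M - a2) - 1%:M.
  have := mulmxV uR; rewrite mulmxBl mul_scalar_mx => <-.
  by rewrite subKr.
move: K SA AR trS.
move: (invmx (z^-1%:M - a1^T)) (invmx (z%:M - a2)) (invmx (z^-1%:M - a1)).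
move=> S R S' K SA AR trS.
rewrite [(c1 *m S' *m b1 + d1)^T]linearD /= !trmx_mul trS.
rewrite ?mulmxDl ?mulmxDr ?mulmxBr ?mulmxBl ?mulmxDl ?mulmxDr ?mulmxBr ?mulmxBl !mulmxA.
rewrite ?mulmxN ?mulNmx !mulmxA.
have t1 : b1^T *m S *m c1^T *m m *m c2 *m R *m b2 =
    b1^T *m (S *m (c1^T *m m *m c2) *m R) *m b2 by rewrite !mulmxA.
have t2 : b1^T *m S *m a1^T *m Z *m b2 = b1^T *m (S *m a1^T) *m Z *m b2.
  by rewrite !mulmxA.
have t3 : b1^T *m Z *m a2 *m R *m b2 = b1^T *m Z *m (a2 *m R) *m b2.
  by rewrite !mulmxA.
rewrite t1 t2 t3 K SA AR.
rewrite ?mulmxDl ?mulmxDr ?mulmxBr ?mulmxBl ?mulmxDl ?mulmxDr ?mulmxBr ?mulmxBl.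
rewrite ?mulmx1 ?mulmxN ?mulNmx -?scalemxAr -?scalemxAl -?scalemxAr -?scalemxAl !mulmxA.
rewrite !mulmx1.
move: (b1^T *m Z *m b2) (z^-1 *: (b1^T *m S *m Z *m b2))
  (z *: (b1^T *m Z *m R *m b2)) (b1^T *m S *m c1^T *m m *m d2)
  (d1^T *m m *m c2 *m R *m b2) (d1^T *m m *m d2) => X Q Q' P Rr D.
by apply/matrixP => i j; rewrite !mxE; ring.
Qed.
Lemma map_mxX (aR rR : comNzRingType) (f : {rmorphism aR -> rR}) n
  (A : 'M[aR]_n) j : map_mx f (A ^+ j) = (map_mx f A) ^+ j.
Proof.
elim: j => [|j IH]; first by rewrite !expr0 map_mx1.
by rewrite !exprS -!mulmxE map_mxM IH.
Qed.

Lemma trmxX (F : comNzRingType) n (A : 'M[F]_n) j : (A ^+ j)^T = (A^T) ^+ j.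
Proof.
elim: j => [|j IH]; first by rewrite !expr0 trmx1.
by rewrite exprS exprSr -!mulmxE trmx_mul IH.
Qed.

Lemma ctrl_zero (F : fieldType) n k p (A : 'M[F]_n) (B : 'M[F]_(n, k))
  (N : 'M[F]_(p, n)) :
  \rank (\mxrow_(j < n) (A ^+ j *m B)) = n ->
  (forall j, N *m A ^+ j *m B = 0) -> N = 0.
Proof.
move=> rk H.
have fr : row_free (\mxrow_(j < n) (A ^+ j *m B)) by rewrite /row_free rk.
apply: (row_free_inj fr); rewrite mul0mx mul_mxrow.
rewrite -mxrow0; apply: eq_mxrow => j.
by rewrite mulmxA H.
Qed.
Lemma cmx_stable (R : realType) n (A : 'M[R]_n) (z : R[i]) :
  schur_stable A -> `|z| = 1 -> (z%:M - cmx A) \in unitmx.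
Proof.
move=> sA z1; rewrite unitmxE -char_poly_eval unitfE.
by apply/negP => /eqP/rootP/sA; rewrite z1 ltxx.
Qed.

Theorem lemmaA2 (R : realType) (n1 n2 m1 m2 k1 k2 : nat)
  (A1 : 'M[R]_n1) (B1 : 'M[R]_(n1, k1)) (C1 : 'M[R]_(m1, n1)) (D1 : 'M[R]_(m1, k1))
  (A2 : 'M[R]_n2) (B2 : 'M[R]_(n2, k2)) (C2 : 'M[R]_(m2, n2)) (D2 : 'M[R]_(m2, k2))
  (M : 'M[R]_(m1, m2)) :
  schur_stable A1 -> schur_stable A2 ->
  (forall z : R[i], `|z| = 1 ->
     tf_star A1 B1 C1 D1 z *m cmx M *m tf A2 B2 C2 D2 z = 0) ->
  controllable A1 B1 -> controllable A2 B2 ->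
  exists Z12 : 'M[R]_(n1, n2),
    block_mx (A1^T *m Z12 *m A2 - Z12) (A1^T *m Z12 *m B2)
             (B1^T *m Z12 *m A2)       (B1^T *m Z12 *m B2)
    = (row_mx C1 D1)^T *m M *m row_mx C2 D2.
Proof.
move=> sA1 sA2 H cA1 cA2.
have sT : forall l, root (char_poly (cmx A1)^T) l -> `|l| < 1.
  by move=> l; rewrite char_poly_tr; apply: sA1.
have cinj m n : injective (@cmx R m n) by apply: map_mx_inj.
have inj : forall Z, A1^T *m Z *m A2 - Z = 0 -> Z = 0.
  move=> Z /eqP; rewrite subr_eq0 => /eqP HZ.
  apply: cinj; rewrite [cmx 0]map_mx0.
  apply: (stein_inj sT sA2).
  by have := congr1 (@cmx R n1 n2) HZ; rewrite /cmx !map_mxM map_trmx.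
have [Z HZ] := stein_surj inj (C1^T *m M *m C2).
exists Z.
pose N1 := C1^T *m M *m D2 - A1^T *m Z *m B2.
pose N2 := D1^T *m M *m C2 - B1^T *m Z *m A2.
pose K := D1^T *m M *m D2 - B1^T *m Z *m B2.
have hC : forall z : R[i], `|z| = 1 ->
    cmx K + (cmx B1)^T *m invmx (z^-1%:M - (cmx A1)^T) *m cmx N1
    + cmx N2 *m invmx (z%:M - cmx A2) *m cmx B2 = 0.
  move=> z z1.
  have zn0 : z != 0 by rewrite -normr_eq0 z1 oner_eq0.
  have u1 : (z^-1%:M - (cmx A1)^T) \in unitmx.
    rewrite -unitmx_tr linearB /= tr_scalar_mx trmxK.
    by apply: cmx_stable; rewrite // normfV z1 invr1.
  have u2 := cmx_stable sA2 z1.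
  have HZc : (cmx A1)^T *m cmx Z *m cmx A2 - cmx Z
             = (cmx C1)^T *m cmx M *m cmx C2.
    by have := congr1 (@cmx R n1 n2) HZ; rewrite /cmx map_mxB !map_mxM !map_trmx.
  rewrite -(H z z1) /tf_star /tf (@stepB _ _ _ _ _ _ _ (cmx A1) (cmx B1) (cmx C1) (cmx D1)
    (cmx A2) (cmx B2) (cmx C2) (cmx D2) (cmx M) (cmx Z) z zn0 u1 u2 HZc).
  by rewrite /K /N1 /N2 /cmx !map_mxB !map_mxM !map_trmx.
have [K0 G0 E0] := stepC sT sA2 hC.
have K0r : K = 0 by apply: cinj; rewrite K0 /cmx map_mx0.
have N2r : N2 = 0.
  apply: (ctrl_zero cA2) => j; apply: cinj.
  by rewrite /cmx map_mx0 !map_mxM map_mxX E0.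
have N1r : N1 = 0.
  apply: trmx_inj; rewrite trmx0; apply: (ctrl_zero cA1) => j; apply: cinj.
  rewrite /cmx map_mx0 !map_mxM map_mxX.
  have := congr1 trmx (G0 j); rewrite trmx0 !trmx_mul trmxK trmxX trmxK mulmxA.
  move=> <-; congr (_ *m _ *m _); apply/matrixP => a b; rewrite !mxE //.
rewrite tr_row_mx mul_col_mx mul_col_row.
congr block_mx => //.
- by apply/esym/eqP; rewrite -subr_eq0 -/N1 N1r.
- by apply/esym/eqP; rewrite -subr_eq0 -/N2 N2r.
- by apply/esym/eqP; rewrite -subr_eq0 -/K K0r.
Qed.
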